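(* Let $N\ge 1$ and $n\ge 2$ be integers, let $V=\mathbb{C}^N$ with basis $e_0,\dots,e_{N-1}$, and let $\kappa,h,\nu_0,g_0,\nu_n,g_n$ be complex numbers with $h,g_0,g_n\neq 0$. Define operators on $V^{\otimes n}$ by $$\hat T_0=K^{\mathrm{ra}}_1(\nu_0,g_0),\qquad \hat T_j=\check R^{\mathrm{ra}}_{j,j+1}(\kappa,h)\ (1\le j\le n-1),\qquad \hat T_n=K^{\mathrm{ra}}_n(\nu_n,g_n).$$ Then $T_j\mapsto \hat T_j$ ($0\le j\le n$) extends to an algebra homomorphism $\rho:H_n(1,1,1)\to\mathrm{End}(V^{\otimes n})$; i.e. the $\hat T_j$ satisfy all defining relations of $H_n(1,1,1)$.
   Context: Type $C$ affine Hecke algebra $H_n(t,t_n,t_0)$: the algebra generated by $T_0,\dots,T_n$ with relations $(T_0-t_0)(T_0+t_0^{-1})=0$; $(T_j-t)(T_j+t^{-1})=0$ for $1\le j\le n-1$; $(T_n-t_n)(T_n+t_n^{-1})=0$; $T_0T_1T_0T_1=T_1T_0T_1T_0$; $T_jT_{j+1}T_j=T_{j+1}T_jT_{j+1}$ for $1\le j\le n-2$; $T_{n-1}T_nT_{n-1}T_n=T_nT_{n-1}T_nT_{n-1}$; $T_jT_k=T_kT_j$ for $|j-k|\ge2$. For $H_n(1,1,1)$ all quadratic relations read $T_j^2=1$. Matrix elements: for $A\in\mathrm{End}(V)$, $Ae_j=\sum_k e_k[A]_j^k$; for $R\in\mathrm{End}(V\otimes V)$, $R(e_i\otimes e_j)=\sum_{k,l}[R]_{ij}^{kl}e_k\otimes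 e_l$. $P$ is the flip $P(x\otimes y)=y\otimes x$, and $\check R=RP$. For $A\in\mathrm{End}(V)$, $A_j\in\mathrm{End}(V^{\otimes n})$ acts as $A$ on the $j$-th factor and as identity elsewhere; similarly $\check R_{j,j+1}$ acts as $\check R$ on factors $j,j+1$. Binomial convention: $\binom{a}{b}=0$ unless $0\le b\le a$; $0^0=1$. Define $\epsilon(i,m,k)=1$ if $i\le k<m$, $-1$ if $m\le k<i$, $0$ otherwise. Jordanian $R$-matrix ($i,j,k,l\in\{0,\dots,N-1\}$, sum over integers $m$): $$[R^{\mathrm{ra}}(\kappa,h)]_{ij}^{kl}=(-1)^{j-l}h^{i+j-k-l}\Big\{\binom{i}{k}\binom{j}{l}-\frac{\kappa}{h}\sum_m(-1)^{m-k}\binom{i}{m}\binom{j+m-k-1}{l}\epsilon(j,m,k)\Big\}.$$ $K$-matrix ($j,k\in\{0,\dots,N-1\}$): $$[K^{\mathrm{ra}}(\nu,g)]_j^k=(-1)^j\binom{j}{k}g^{j-k}+2\nu\sum_{0\le l<j}(-1)^{j-l}\binom{j-l-1}{k-l}g^{j-k-1}.$$ *)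

(* Defs.v *)
(* Complex numbers are modelled by algC (algebraic complex
   numbers, mathcomp's numClosedFieldType). *)
From HB Require Import structures.
From mathcomp Require Import all_boot all_order all_algebra all_field.
Set Implicit Arguments. Unset Strict Implicit. Unset Printing Implicit Defensive.
Import Order.TTheory GRing.Theory Num.Theory.
Local Open Scope ring_scope.

Definition binz (a b : int) : algC :=
  if (0 <= b) && (b <= a) then ('C(`|a|%N, `|b|%N))%:R else 0.

Definition epsz (i m k : int) : algC :=
  if (i <= k) && (k < m) then 1 else if (m <= k) && (k < i) then -1 else 0.

(* [R^ra(kappa,h)]_{ij}^{kl}; the sum over integers m is restricted to
   0 <= m < N, outside of which binz i m vanishes (as i < N). *)
Definition Rra (N : nat) (kappa h : algC) (i j k l : nat) : algC :=
  (-1) ^ (j%:Z - l%:Z) * h ^ (i%:Z + j%:Z - k%:Z - l%:Z) *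
  (binz i k * binz j l
   - kappa / h * \sum_(0 <= m < N)
       (-1) ^ (m%:Z - k%:Z) * binz i m * binz (j%:Z + m%:Z - k%:Z - 1) l
       * epsz j m k).

Definition Kra (nu g : algC) (j k : nat) : algC :=
  (-1) ^+ j * binz j k * g ^ (j%:Z - k%:Z)
  + 2 * nu * \sum_(0 <= l < j)
      (-1) ^ (j%:Z - l%:Z) * binz (j%:Z - l%:Z - 1) (k%:Z - l%:Z)
      * g ^ (j%:Z - k%:Z - 1).

(* Basis of V^{\otimes n}: e_{x 0} (x) ... (x) e_{x (n-1)},
   x : {ffun 'I_n -> 'I_N}; tensor position p (0-based) = factor p+1. *)
Definition tidx (n N : nat) := {ffun 'I_n -> 'I_N}.

Definition digit n N (x : tidx n N) (p : nat) : nat :=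
  if @insub _ (fun q => q < n)%N _ p is Some q then val (x q) else 0%N.

(* operators on V^{\otimes n} as square matrices indexed by an enumeration
   of the basis; entry (row y, column x) is the coefficient of e_y in A e_x *)
Definition Op (n N : nat) := 'M[algC]_(#|{: tidx n N}|).

Definition mkOp n N (f : tidx n N -> tidx n N -> algC) : Op n N :=
  \matrix_(a, b) f (enum_val a) (enum_val b).

Definition agree_off n N (x y : tidx n N) (P : nat -> bool) : bool :=
  [forall q : 'I_n, ~~ P (val q) ==> (x q == y q)].

(* A_p for A with [A]_j^k = A j k, acting on 0-based position p *)
Definition op1 n N (A : nat -> nat -> algC) (p : nat) : Op n N :=
  mkOp (fun y x => A (digit x p) (digit y p) *
                   (agree_off x y (fun q => q == p))%:R).

(* \check R_{p,p+1} (0-based positions p, p+1) with \check R = R P,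
   so [\check R]_{ij}^{kl} = [R]_{ji}^{kl}. *)
Definition op2 n N (R : nat -> nat -> nat -> nat -> algC) (p : nat) : Op n N :=
  mkOp (fun y x => R (digit x p.+1) (digit x p) (digit y p) (digit y p.+1) *
                   (agree_off x y (fun q => (q == p) || (q == p.+1)))%:R).

Definition That (n N : nat) (kappa h nu0 g0 nun gn : algC) (j : nat) : Op n N :=
  if j == 0%N then @op1 n N (Kra nu0 g0) 0
  else if j == n then @op1 n N (Kra nun gn) n.-1
  else @op2 n N (Rra N kappa h) j.-1.

(* Main.v *)
Require Import Defs.
From HB Require Import structures.
From mathcomp Require Import all_boot all_order all_algebra all_field.
From mathcomp Require Import ring zify.
From mathcomp.multinomials Require Import mpoly.
From Stdlib Require Import FunctionalExtensionality.
Set Implicit Arguments. Unset Strict Implicit. Unset Printing Implicit Defensive.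
Import Order.TTheory GRing.Theory Num.Theory.
Local Open Scope ring_scope.
Notation "x %:F" := (@FracField.tofrac _ x) (format "x %:F").

Section Basic.
Variables (n N : nat).
Local Notation A := {mpoly algC[n]}.
Local Notation T := (tidx n N).
Local Notation vec := 'cV[algC]_(#|{: T}|).

Definition mono (x : T) : A := \prod_(i < n) 'X_i ^+ (x i).
Definition mm (x : T) : 'X_{1..n} := [multinom (val (x i)) | i < n].

Lemma monoE x : mono x = 'X_[mm x].
Proof. by rewrite mpolyXE_id /mono; apply: eq_bigr => i _; rewrite mnmE. Qed.

Lemma mm_inj : injective mm.
Proof.
move=> x y /mnmP E; apply/ffunP => i; apply/val_inj.
by have := E i; rewrite !mnmE.
Qed.

Definition poly (v : vec) : A := \sum_(y : T) v (enum_rank y) 0 *: mono y.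
Definition colp (M : Op n N) (x : T) : A :=
  \sum_(y : T) M (enum_rank y) (enum_rank x) *: mono y.

Lemma poly_coef (v : vec) (y : T) : (poly v)@_(mm y) = v (enum_rank y) 0.
Proof.
rewrite /poly raddf_sum /= (bigD1 y) //= big1 ?addr0.
  by rewrite mcoeffZ monoE mcoeffX eqxx mulr1.
move=> z /negbTE zy; rewrite mcoeffZ monoE mcoeffX.
case: eqP => [/mm_inj E|]; last by rewrite mulr0.
by rewrite E eqxx in zy.
Qed.

Lemma poly_inj (u v : vec) : poly u = poly v -> u = v.
Proof.
move=> E; apply/matrixP => a b; rewrite (ord1 b).
by rewrite -(enum_valK a) -!poly_coef E.
Qed.

Lemma sum_rank (F : 'I_#|{: T}| -> A) :
  \sum_(b : 'I_#|{: T}|) F b = \sum_(x : T) F (enum_rank x).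
Proof.
by rewrite (reindex (@enum_rank T)) //; exists enum_val => b _;
  rewrite ?enum_rankK ?enum_valK.
Qed.

Lemma poly_mul (M : Op n N) (v : vec) :
  poly (M *m v) = \sum_(x : T) v (enum_rank x) 0 *: colp M x.
Proof.
rewrite /poly /colp.
under eq_bigr => y _ do rewrite mxE scaler_suml.
rewrite exchange_big /=.
rewrite (reindex (@enum_rank T)) /=; last first.
  by exists enum_val => b _; rewrite ?enum_rankK ?enum_valK.
apply: eq_bigr => x _; rewrite scaler_sumr; apply: eq_bigr => y _.
by rewrite scalerA mulrC.
Qed.

Lemma mx_eq_poly (M M' : Op n N) :
  (forall v : vec, poly (M *m v) = poly (M' *m v)) -> M = M'.
Proof.
move=> E; apply/matrixP => a b.
have := congr1 (fun w : vec => w a 0) (poly_inj (E (delta_mx b 0))).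
by rewrite -!colE !mxE.
Qed.

End Basic.

Section Subst.
Variable (n : nat).
Local Notation A := {mpoly algC[n]}.
Definition Pt := 'I_n -> A.

Definition Sb (t : Pt) (f : A) : A := f \mPo [tuple t i | i < n].
Definition idPt : Pt := fun i => 'X_i.

Lemma Sb_id f : Sb idPt f = f.
Proof. exact: comp_mpoly_id. Qed.

Lemma SbD t : {morph Sb t : x y / x + y}. Proof. exact: comp_mpolyD. Qed.
Lemma SbB t : {morph Sb t : x y / x - y}. Proof. exact: comp_mpolyB. Qed.
Lemma SbN t : {morph Sb t : x / - x}. Proof. exact: comp_mpolyN. Qed.
Lemma SbM t : {morph Sb t : x y / x * y}. Proof. exact: rmorphM. Qed.
Lemma SbC t c : Sb t c%:MP = c%:MP. Proof. exact: comp_mpolyC. Qed.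
Lemma Sb0 t : Sb t 0 = 0. Proof. exact: comp_mpoly0. Qed.
Lemma Sb1 t : Sb t 1 = 1. Proof. exact: comp_mpoly1. Qed.
Lemma SbX t i : Sb t 'X_i = t i.
Proof. by rewrite /Sb comp_mpolyXU -tnth_nth tnth_map tnth_ord_tuple. Qed.
Lemma SbZ t c f : Sb t (c *: f) = c *: Sb t f. Proof. exact: comp_mpolyZ. Qed.
Lemma SbXn t f k : Sb t (f ^+ k) = Sb t f ^+ k. Proof. exact: rmorphXn. Qed.
Lemma Sb_sum t I (r : seq I) (P : pred I) (F : I -> A) :
  Sb t (\sum_(i <- r | P i) F i) = \sum_(i <- r | P i) Sb t (F i).
Proof. exact: raddf_sum. Qed.
Lemma Sb_prod t I (r : seq I) (P : pred I) (F : I -> A) :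
  Sb t (\prod_(i <- r | P i) F i) = \prod_(i <- r | P i) Sb t (F i).
Proof. exact: rmorph_prod. Qed.

Lemma Sb_ext t t' f : t =1 t' -> Sb t f = Sb t' f.
Proof.
move=> E; rewrite /Sb; congr comp_mpoly; apply: eq_from_tnth => i.
by rewrite !tnth_map E.
Qed.

Lemma Sb_comp t s f : Sb t (Sb s f) = Sb (fun i => Sb t (s i)) f.
Proof.
rewrite /Sb (comp_mpolyEX f [tuple s i | i < n]).
rewrite (comp_mpolyEX f [tuple Sb t (s i) | i < n]) raddf_sum /=.
apply: eq_bigr => m _; rewrite comp_mpolyZ; congr (_ *: _).
rewrite !comp_mpolyX rmorph_prod /=; apply: eq_bigr => i _.
by rewrite rmorphXn /= !tnth_map !tnth_ord_tuple.
Qed.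

Definition getP (t : Pt) (k : nat) : A :=
  if (insub k : option 'I_n) is Some i then t i else 0.

Lemma getP_ord t (i : 'I_n) : getP t i = t i.
Proof. by rewrite /getP valK. Qed.

Lemma Sb_getP t s k : Sb t (getP s k) = getP (fun i => Sb t (s i)) k.
Proof. by rewrite /getP; case: insubP => // _; rewrite Sb0. Qed.

Lemma getP_ext t t' k : t =1 t' -> getP t k = getP t' k.
Proof. by move=> E; rewrite /getP; case: insubP. Qed.

Lemma getP_ge t k : (n <= k)%N -> getP t k = 0.
Proof. by move=> H; rewrite /getP insubF // ltnNge H. Qed.

Definition Xn (k : nat) : A := getP idPt k.

Definition refl (p : nat) (g : algC) (t : Pt) : Pt :=
  fun i => if val i == p then - getP t p - g%:MP else t i.
Definition swap (p : nat) (h : algC) (t : Pt) : Pt :=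
  fun i => if val i == p then getP t p.+1 - h%:MP
           else if val i == p.+1 then getP t p + h%:MP else t i.

Lemma getP_refl p g t k : (k < n)%N ->
  getP (refl p g t) k = if k == p then - getP t p - g%:MP else getP t k.
Proof.
move=> kn; rewrite /getP insubT /refl /=.
by case: eqP => // ->; rewrite insubT.
Qed.

Lemma getP_swap p h t k : (k < n)%N ->
  getP (swap p h t) k = if k == p then getP t p.+1 - h%:MP
    else if k == p.+1 then getP t p + h%:MP else getP t k.
Proof.
move=> kn; rewrite /getP insubT /swap /=.
case: eqP => // _; case: eqP => // ->; by rewrite insubT.
Qed.

Lemma Sb_refl t p g i : Sb t (refl p g idPt i) = refl p g t i.
Proof.
rewrite /refl; case: eqP => _; last by rewrite SbX.
by rewrite SbB SbN SbC Sb_getP; congr (- _ - _); apply: getP_ext => j; rewrite SbX.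
Qed.

Lemma Sb_swap t p h i : Sb t (swap p h idPt i) = swap p h t i.
Proof.
rewrite /swap; case: eqP => _.
  by rewrite SbB SbC Sb_getP; congr (_ - _); apply: getP_ext => j; rewrite SbX.
case: eqP => _; last by rewrite SbX.
by rewrite SbD SbC Sb_getP; congr (_ + _); apply: getP_ext => j; rewrite SbX.
Qed.

Lemma Sb_Xn t k : Sb t (Xn k) = getP t k.
Proof. by rewrite /Xn Sb_getP; apply: getP_ext => j; rewrite SbX. Qed.

Lemma Sb_reflC t p g f : Sb t (Sb (refl p g idPt) f) = Sb (refl p g t) f.
Proof. by rewrite Sb_comp; apply: Sb_ext => i; rewrite Sb_refl. Qed.
Lemma Sb_swapC t p h f : Sb t (Sb (swap p h idPt) f) = Sb (swap p h t) f.
Proof. by rewrite Sb_comp; apply: Sb_ext => i; rewrite Sb_swap. Qed.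

End Subst.

Definition Tstep (F : fieldType) (c a u w : F) := w + c * (u - w) / a.

Lemma Tstep_solve (F : fieldType) (c a u w x : F) :
  a != 0 -> a * (x - w) = c * (u - w) -> x = Tstep c a u w.
Proof.
move=> anz E; rewrite /Tstep -E [a * _]mulrC mulfK //.
by rewrite addrC subrK.
Qed.

Lemma gen_quad (F : fieldType) (c a x y : F) : a != 0 ->
  Tstep c a (Tstep c a x y) (Tstep c (- a) y x) = x.
Proof. move=> anz; rewrite /Tstep; field; by rewrite oppr_eq0 anz. Qed.

Lemma gen_comm (F : fieldType) (c1 a1 c2 a2 x y1 y2 z : F) :
  a1 != 0 -> a2 != 0 ->
  Tstep c1 a1 (Tstep c2 a2 x y2) (Tstep c2 a2 y1 z) =
  Tstep c2 a2 (Tstep c1 a1 x y1) (Tstep c1 a1 y2 z).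
Proof. move=> h1 h2; rewrite /Tstep; field; by rewrite h1 h2. Qed.

Section Impl.
Variables (n N : nat).
Local Notation A := {mpoly algC[n]}.
Local Notation vec := 'cV[algC]_(#|{: tidx n N}|).
Local Notation ID := (@idPt n).

Definition impl (M : Op n N) (pt : Pt n -> Pt n) (af : Pt n -> A) (c : algC) :=
  forall v : vec, af ID * (poly (M *m v) - Sb (pt ID) (poly v)) =
                  c%:MP * (poly v - Sb (pt ID) (poly v)).

Definition natural (pt : Pt n -> Pt n) (af : Pt n -> A) :=
  (forall t f, Sb t (Sb (pt ID) f) = Sb (pt t) f) /\
  (forall t, Sb t (af ID) = af t).

Lemma Lstep M pt af c t (v : vec) : impl M pt af c -> natural pt af ->
  af t != 0 ->
  (Sb t (poly (M *m v)))%:F =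
  Tstep (c%:MP)%:F (af t)%:F (Sb t (poly v))%:F (Sb (pt t) (poly v))%:F.
Proof.
move=> I [h1 h2] nz; apply: Tstep_solve; first by rewrite tofrac_eq0.
have := congr1 (Sb t) (I v).
rewrite !SbM !SbB SbC h1 h2 => E.
by rewrite -!tofracB -!tofracM E.
Qed.

Arguments Lstep {M pt af c} t v.

Lemma toF_inj (x y : A) : x%:F = y%:F -> x = y.
Proof. by move=> E; apply/eqP; rewrite -tofrac_eq E. Qed.

Lemma quad_gen M pt af c : impl M pt af c -> natural pt af ->
  (forall t, pt (pt t) =1 t) -> (forall t, af (pt t) = - af t) ->
  af ID != 0 -> M *m M = 1%:M.
Proof.
move=> I nt inv anti nz; apply: mx_eq_poly => v.
rewrite mul1mx -mulmxA; apply: toF_inj.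
rewrite -[poly (M *m _)](Sb_id) (Lstep _ _ I nt) //.
rewrite (Lstep _ _ I nt) // (Lstep _ _ I nt) ?anti ?oppr_eq0 //.
rewrite (Sb_ext _ (inv _)) Sb_id tofracN.
by apply: gen_quad; rewrite tofrac_eq0.
Qed.

Lemma comm_gen M1 pt1 af1 c1 M2 pt2 af2 c2 :
  impl M1 pt1 af1 c1 -> natural pt1 af1 ->
  impl M2 pt2 af2 c2 -> natural pt2 af2 ->
  (forall t, pt1 (pt2 t) =1 pt2 (pt1 t)) ->
  (forall t, af1 (pt2 t) = af1 t) -> (forall t, af2 (pt1 t) = af2 t) ->
  af1 ID != 0 -> af2 ID != 0 -> M1 *m M2 = M2 *m M1.
Proof.
move=> I1 n1 I2 n2 C e1 e2 z1 z2; apply: mx_eq_poly => v.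
rewrite -!mulmxA; apply: toF_inj.
rewrite -[poly (M1 *m _)](Sb_id) -[poly (M2 *m (M1 *m _))](Sb_id).
rewrite (Lstep ID (M2 *m v) I1 n1) // (Lstep ID v I2 n2) //.
rewrite (Lstep (pt1 ID) v I2 n2) ?e2 //.
rewrite (Lstep ID (M1 *m v) I2 n2) // (Lstep ID v I1 n1) //.
rewrite (Lstep (pt2 ID) v I1 n1) ?e1 //.
rewrite (Sb_ext _ (C _)).
by apply: gen_comm; rewrite tofrac_eq0.
Qed.

End Impl.
Arguments Lstep {n N M pt af c} t v.

Lemma gen_B2 (F : fieldType) (k a b c1 c2 e x1 x2 x21 x12 x212 x121 x1212 : F) :
  k = 2%:R ->
  a != 0 -> b != 0 -> b - a != 0 -> a - k * b != 0 ->
  Tstep c1 a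
    (Tstep c2 b
       (Tstep c1 a
          (Tstep c2 b e x2)
          (Tstep c2 (b - a) x1 x21))
       (Tstep c1 (a - k * b)
          (Tstep c2 (- b) x2 e)
          (Tstep c2 (b - a) x12 x212)))
    (Tstep c2 (b - a)
       (Tstep c1 (- a)
          (Tstep c2 (b - a) x1 x21)
          (Tstep c2 b e x2))
       (Tstep c1 (a - k * b)
          (Tstep c2 (- (b - a)) x21 x1)
          (Tstep c2 b x121 x1212))) =
  Tstep c2 b
    (Tstep c1 a
       (Tstep c2 b
          (Tstep c1 a e x1)
          (Tstep c1 (a - k * b) x2 x12))
       (Tstep c2 (b - a)
          (Tstep c1 (- a) x1 e)
          (Tstep c1 (a - k * b) x21 x121)))
    (Tstep c1 (a - k * b)
       (Tstep c2 (- b)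
          (Tstep c1 (a - k * b) x2 x12)
          (Tstep c1 a e x1))
       (Tstep c2 (b - a)
          (Tstep c1 (- (a - k * b)) x12 x2)
          (Tstep c1 a x212 x1212))).
Proof.
move=> -> za zb zab zab2; rewrite /Tstep; field.
by rewrite za zb zab zab2 !oppr_eq0 za zb zab zab2.
Qed.


Lemma gen_braidA (F : fieldType) (cc a b e x1 x2 x12 x21 x212 : F) :
  a != 0 -> b != 0 -> a + b != 0 ->
  Tstep cc a
    (Tstep cc b (Tstep cc a e x1)
       (Tstep cc (a + b) x2 x12))
    (Tstep cc (a + b) (Tstep cc (- a) x1 e)
       (Tstep cc b x21 x212)) =
  Tstep cc b
    (Tstep cc a (Tstep cc b e x2)
       (Tstep cc (a + b) x1 x21))
    (Tstep cc (a + b) (Tstep cc (- b) x2 e)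
       (Tstep cc a x12 x212)).
Proof. move=> za zb zab; rewrite /Tstep; field; by rewrite za zb zab !oppr_eq0 za zb. Qed.

Section Braid.
Variables (n N : nat).
Local Notation A := {mpoly algC[n]}.
Local Notation vec := 'cV[algC]_(#|{: tidx n N}|).
Local Notation ID := (@idPt n).

Lemma braidA_gen (M1 : Op n N) pt1 af1 c (M2 : Op n N) pt2 af2 :
  impl M1 pt1 af1 c -> natural pt1 af1 ->
  impl M2 pt2 af2 c -> natural pt2 af2 ->
  (forall t, pt1 (pt1 t) =1 t) -> (forall t, pt2 (pt2 t) =1 t) ->
  (forall t, pt1 (pt2 (pt1 t)) =1 pt2 (pt1 (pt2 t))) ->
  (forall t, af1 (pt1 t) = - af1 t) -> (forall t, af2 (pt2 t) = - af2 t) ->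
  af1 (pt2 ID) = af1 ID + af2 ID -> af2 (pt1 ID) = af1 ID + af2 ID ->
  af1 (pt2 (pt1 ID)) = af2 ID -> af2 (pt1 (pt2 ID)) = af1 ID ->
  af1 ID != 0 -> af2 ID != 0 -> af1 ID + af2 ID != 0 ->
  M1 *m M2 *m M1 = M2 *m M1 *m M2.
Proof.
move=> I1 n1 I2 n2 i1 i2 br a11 a22 a12 a21 a121 a212 z1 z2 z12.
apply: mx_eq_poly => v.
rewrite -!mulmxA; apply: toF_inj.
rewrite -[poly (M1 *m _)](Sb_id) -[poly (M2 *m (M1 *m _))](Sb_id).
rewrite (Lstep ID (M2 *m (M1 *m v)) I1 n1) //.
rewrite (Lstep ID (M1 *m v) I2 n2) // (Lstep (pt1 ID) (M1 *m v) I2 n2) ?a21 //.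
rewrite (Lstep ID v I1 n1) // (Lstep (pt2 ID) v I1 n1) ?a12 //.
rewrite (Lstep (pt1 ID) v I1 n1) ?a11 ?oppr_eq0 //.
rewrite (Lstep (pt2 (pt1 ID)) v I1 n1) ?a121 //.
rewrite (Lstep ID (M1 *m (M2 *m v)) I2 n2) //.
rewrite (Lstep ID (M2 *m v) I1 n1) // (Lstep (pt2 ID) (M2 *m v) I1 n1) ?a12 //.
rewrite (Lstep ID v I2 n2) // (Lstep (pt1 ID) v I2 n2) ?a21 //.
rewrite (Lstep (pt2 ID) v I2 n2) ?a22 ?oppr_eq0 //.
rewrite (Lstep (pt1 (pt2 ID)) v I2 n2) ?a212 //.
rewrite (Sb_ext _ (i1 _)) (Sb_ext _ (i2 _)) (Sb_ext _ (br _)) !Sb_id.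
rewrite !tofracN !tofracD.
by apply: gen_braidA; rewrite -?tofracD tofrac_eq0.
Qed.

End Braid.

Section B2.
Variables (n N : nat).
Local Notation A := {mpoly algC[n]}.
Local Notation vec := 'cV[algC]_(#|{: tidx n N}|).
Local Notation ID := (@idPt n).

Lemma B2_gen (M1 : Op n N) pt1 af1 c1 (M2 : Op n N) pt2 af2 c2 :
  impl M1 pt1 af1 c1 -> natural pt1 af1 ->
  impl M2 pt2 af2 c2 -> natural pt2 af2 ->
  (forall t, pt1 (pt1 t) = t) -> (forall t, pt2 (pt2 t) = t) ->
  (forall t, pt2 (pt1 (pt2 (pt1 t))) = pt1 (pt2 (pt1 (pt2 t)))) ->
  (forall t, af1 (pt1 t) = - af1 t) -> (forall t, af2 (pt2 t) = - af2 t) ->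
  af2 (pt1 ID) = af2 ID - af1 ID -> af1 (pt2 ID) = af1 ID - 2%:R * af2 ID ->
  af1 (pt2 (pt1 ID)) = af1 ID - 2%:R * af2 ID ->
  af2 (pt1 (pt2 ID)) = af2 ID - af1 ID ->
  af2 (pt1 (pt2 (pt1 ID))) = af2 ID -> af1 (pt2 (pt1 (pt2 ID))) = af1 ID ->
  af1 ID != 0 -> af2 ID != 0 -> af2 ID - af1 ID != 0 ->
  af1 ID - 2%:R * af2 ID != 0 ->
  M1 *m M2 *m M1 *m M2 = M2 *m M1 *m M2 *m M1.
Proof.
move=> I1 n1 I2 n2 i1 i2 br a11 a22 h1 h2 h3 h4 h5 h6 z1 z2 z3 z4.
apply: mx_eq_poly => v.
rewrite -!mulmxA; apply: toF_inj.
rewrite -[poly (M1 *m _)](Sb_id) -[poly (M2 *m (M1 *m _))](Sb_id).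
Time repeat (rewrite (Lstep _ _ I1 n1) || rewrite (Lstep _ _ I2 n2)).
Time all: rewrite ?i1 ?i2 ?br ?a11 ?a22 ?h1 ?h2 ?h3 ?h4 ?h5 ?h6 ?oppr_eq0 ?Sb_id //.
rewrite ?tofracN ?tofracB ?tofracM.
Time apply: gen_B2; first (by rewrite rmorph_nat); by rewrite -?tofracM -?tofracB tofrac_eq0.
Qed.
End B2.

Section Pts.
Variable n : nat.
Local Notation A := {mpoly algC[n]}.
Local Notation ID := (@idPt n).

Definition aK (p : nat) (g : algC) (t : Pt n) : A := 2%:R * getP t p + g%:MP.
Definition aR (p : nat) (h : algC) (t : Pt n) : A := getP t p - getP t p.+1 + h%:MP.

Lemma Pt_eq (t t' : Pt n) : (forall k, (k < n)%N -> getP t k = getP t' k) -> t = t'.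
Proof.
move=> E; apply: functional_extensionality => i.
by rewrite -!getP_ord E.
Qed.

Lemma Sb_getPid t k : Sb t (getP ID k) = getP t k.
Proof. by rewrite Sb_getP; apply: getP_ext => j; rewrite SbX. Qed.

Lemma Sb_nat t k : Sb t (k%:R : A) = k%:R.
Proof. by rewrite /Sb rmorph_nat. Qed.

Lemma natural_refl p g : natural (refl p g) (aK p g).
Proof.
split=> [t f|t]; first exact: Sb_reflC.
by rewrite /aK SbD SbM Sb_nat SbC Sb_getPid.
Qed.

Lemma natural_swap p h : natural (swap p h) (aR p h).
Proof.
split=> [t f|t]; first exact: Sb_swapC.
by rewrite /aR SbD SbB SbC !Sb_getPid.
Qed.

Ltac gsimp := rewrite ?getP_refl ?getP_swap //.

Ltac ncase := repeat (case: eqP => //= ?); subst => //; try lia.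

Lemma refl_inv p g (t : Pt n) : (p < n)%N -> refl p g (refl p g t) = t.
Proof.
move=> pn; apply: Pt_eq => k kn; gsimp; ncase.
ring.
Qed.

Lemma swap_inv p h (t : Pt n) : (p.+1 < n)%N -> swap p h (swap p h t) = t.
Proof.
move=> pn; have pn' : (p < n)%N by lia.
apply: Pt_eq => k kn; gsimp; ncase; gsimp; ncase; try ring.
Qed.

Ltac ptauto := apply: Pt_eq => k kn; do 5 (rewrite ?getP_refl ?getP_swap //; ncase); try ring.

Lemma aK_refl p g (t : Pt n) : (p < n)%N -> aK p g (refl p g t) = - aK p g t.
Proof. move=> pn; rewrite /aK getP_refl // eqxx; ring. Qed.

Lemma aR_swap p h (t : Pt n) : (p.+1 < n)%N -> aR p h (swap p h t) = - aR p h t.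
Proof.
move=> pn; have pn' : (p < n)%N by lia.
rewrite /aR !getP_swap // eqxx; ncase; ring.
Qed.

Lemma braidA_pt p h (t : Pt n) : (p.+2 < n)%N ->
  swap p h (swap p.+1 h (swap p h t)) = swap p.+1 h (swap p h (swap p.+1 h t)).
Proof.
move=> p2; have p1 : (p.+1 < n)%N by lia. have p0 : (p < n)%N by lia.
ptauto.
Qed.

Lemma B2L_pt g h (t : Pt n) : (1 < n)%N ->
  swap 0 h (refl 0 g (swap 0 h (refl 0 g t))) =
  refl 0 g (swap 0 h (refl 0 g (swap 0 h t))).
Proof.
move=> p1; have p0 : (0 < n)%N by lia.
ptauto.
Qed.

Lemma B2R_pt p g h (t : Pt n) : (p.+1 < n)%N ->
  swap p h (refl p.+1 g (swap p h (refl p.+1 g t))) =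
  refl p.+1 g (swap p h (refl p.+1 g (swap p h t))).
Proof.
move=> p1; have p0 : (p < n)%N by lia.
ptauto.
Qed.

Lemma comm_rr p q g g' (t : Pt n) : (p < n)%N -> (q < n)%N -> p != q ->
  refl p g (refl q g' t) = refl q g' (refl p g t).
Proof. move=> pn qn /eqP pq; ptauto. Qed.

Lemma comm_rs p q g h (t : Pt n) : (p < n)%N -> (q.+1 < n)%N -> p != q -> p != q.+1 ->
  refl p g (swap q h t) = swap q h (refl p g t).
Proof. move=> pn q1 /eqP pq /eqP pq1; have q0 : (q < n)%N by lia. ptauto. Qed.

Lemma comm_ss p q h (t : Pt n) : (q.+1 < n)%N -> (p.+2 <= q)%N ->
  swap p h (swap q h t) = swap q h (swap p h t).
Proof.
move=> q1 pq; have q0 : (q < n)%N by lia. have p1 : (p.+1 < n)%N by lia.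
have p0 : (p < n)%N by lia. ptauto.
Qed.

Lemma aK_reflo p q g g' (t : Pt n) : (p < n)%N -> (q < n)%N -> p != q ->
  aK p g (refl q g' t) = aK p g t.
Proof. move=> pn qn /eqP pq; rewrite /aK getP_refl //; ncase. Qed.

Lemma aK_swapo p q g h (t : Pt n) : (p < n)%N -> (q.+1 < n)%N -> p != q -> p != q.+1 ->
  aK p g (swap q h t) = aK p g t.
Proof. move=> pn qn /eqP pq /eqP pq1; rewrite /aK getP_swap //; ncase. Qed.

Lemma aR_reflo p q g h (t : Pt n) : (p < n)%N -> (q.+1 < n)%N -> p != q -> p != q.+1 ->
  aR q h (refl p g t) = aR q h t.
Proof.
move=> pn qn /eqP pq /eqP pq1; have q0 : (q < n)%N by lia.
by rewrite /aR !getP_refl //; ncase.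
Qed.

Lemma aR_swapo p q h (t : Pt n) : (p.+1 < n)%N -> (q.+1 < n)%N ->
  ((p.+2 <= q) || (q.+2 <= p))%N -> aR p h (swap q h t) = aR p h t.
Proof.
move=> pn qn pq; have q0 : (q < n)%N by lia. have p0 : (p < n)%N by lia.
by rewrite /aR !getP_swap //; ncase.
Qed.

Lemma getPID (i : 'I_n) : getP ID i = 'X_i.
Proof. by rewrite getP_ord. Qed.

Lemma lin_nz (i : 'I_n) (a : algC) (f : A) : a != 0 -> f@_(U_(i)%MM) = 0 ->
  a *: 'X_i + f != 0.
Proof.
move=> az fz; apply/eqP => /(congr1 (mcoeff U_(i)%MM)).
rewrite mcoeffD mcoeffZ mcoeffX fz mcoeff0 eqxx addr0 mulr1 => /eqP.
by rewrite (negbTE az).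
Qed.

End Pts.

Lemma binz_nat (a b : nat) : binz a b = ('C(a, b))%:R.
Proof.
rewrite /binz le0z_nat lez_nat /=; case: leqP => // ab.
by rewrite bin_small.
Qed.

Lemma binz_negr (a b : int) : b < 0 -> binz a b = 0.
Proof. by rewrite /binz => b0; rewrite lt_geF. Qed.

Lemma binz_negl (a b : int) : a < 0 -> binz a b = 0.
Proof.
rewrite /binz => a0; case: (0 <= b) / boolP => //= b0; case: lerP => // ba.
by have := lt_le_trans a0 (le_trans b0 ba); rewrite ltxx.
Qed.

Lemma expz_sub (x : algC) (a b : nat) : (b <= a)%N ->
  x ^ (a%:Z - b%:Z) = x ^+ (a - b).
Proof. by move=> ba; rewrite subzn. Qed.

Section UK.
Variable n : nat.
Local Notation A := {mpoly algC[n]}.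

Lemma sum_ord_nat (N : nat) (F : nat -> A) :
  \sum_(k < N) F k = \sum_(0 <= k < N) F k.
Proof. by rewrite big_mkord. Qed.

Lemma sum_nat_cut (N m : nat) (F : nat -> A) : (m <= N)%N ->
  (forall k, (m <= k)%N -> F k = 0) ->
  \sum_(0 <= k < N) F k = \sum_(0 <= k < m) F k.
Proof.
move=> mN F0; rewrite (@big_cat_nat _ _ _ m 0 N) //=.
rewrite [X in _ + X]big1_seq ?addr0 // => k /andP[_].
by rewrite mem_iota => /andP[mk _]; apply: F0.
Qed.

Lemma K1 (N j : nat) (g : algC) (X : A) : (j < N)%N ->
  \sum_(0 <= k < N) ((-1) ^+ j * binz j k * g ^ (j%:Z - k%:Z)) *: X ^+ k =
  (- X - g%:MP) ^+ j.
Proof.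
move=> jN.
rewrite (@sum_nat_cut N j.+1) //; last first.
  by move=> k jk; rewrite binz_nat bin_small // mulr0 mul0r scale0r.
have -> : - X - g%:MP = - (g%:MP + X) by rewrite opprD addrC.
rewrite [in RHS]exprNn exprDn big_mkord mulr_sumr /=.
apply: eq_bigr => k _.
have kj : (k <= j)%N by rewrite -ltnS.
rewrite binz_nat expz_sub // -mulr_natr -mul_mpolyC !rmorphM !rmorphXn /=.
rewrite rmorph_nat rmorphN rmorph1 -(@rmorph_nat _ {mpoly algC[n]} (@mpolyC n algC)).
ring.
Qed.

Lemma K2 (N j : nat) (g : algC) (X : A) : (j < N)%N ->
  \sum_(0 <= k < N) (\sum_(0 <= l < j) (-1) ^ (j%:Z - l%:Z) *
       binz (j%:Z - l%:Z - 1) (k%:Z - l%:Z) * g ^ (j%:Z - k%:Z - 1)) *: X ^+ k =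
  \sum_(0 <= l < j) (-1) ^+ (j - l) *: (X ^+ l * (X + g%:MP) ^+ (j - l - 1)).
Proof.
move=> jN.
under eq_bigr => k _ do rewrite scaler_suml.
rewrite exchange_big /=.
apply: eq_big_nat => l /andP[_ lj].
have lN : (l <= N)%N by lia. have lj' : (l <= j)%N by lia. have jN' : (j <= N)%N by lia.
rewrite (@big_cat_nat _ _ _ l 0 N) //= big1_seq ?add0r; last first.
  move=> k /andP[_]; rewrite mem_iota => /andP[_ kl].
  by rewrite binz_negr ?mulr0 ?mul0r ?scale0r //; lia.
rewrite (@big_cat_nat _ _ _ j l N) //=.
rewrite [X in _ + X]big1_seq ?addr0; last first.
  move=> k /andP[_]; rewrite mem_iota => /andP[jk _].
  have -> : j%:Z - l%:Z - 1 = (j - l - 1)%N :> int by lia.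
  have -> : k%:Z - l%:Z = (k - l)%N :> int by lia.
  by rewrite binz_nat bin_small ?mulr0 ?mul0r ?scale0r //; lia.
rewrite -{1}[l]add0n big_addn.
rewrite [X + g%:MP]addrC exprDn.
have -> : ((j - l - 1).+1 = j - l)%N by lia.
rewrite big_mkord mulr_sumr scaler_sumr.
apply: eq_bigr => [[i /= ilt]] _.
have -> : j%:Z - l%:Z - 1 = (j - l - 1)%N :> int by lia.
have -> : (i + l)%:Z - l%:Z = i :> int by lia.
have -> : (j%:Z - (i + l)%:Z - 1) = (j - l - 1 - i)%N :> int by lia.
have -> : j%:Z - l%:Z = (j - l)%N :> int by lia.
rewrite binz_nat -mulr_natr -mul_mpolyC -[in RHS]mul_mpolyC !rmorphM !rmorphXn /=.
rewrite rmorph_nat rmorphN rmorph1 -(@rmorph_nat _ {mpoly algC[n]} (@mpolyC n algC)).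
rewrite exprD; ring.
Qed.

Lemma K3 (j : nat) (g : algC) (X : A) :
  (2%:R * X + g%:MP) *
    \sum_(0 <= l < j) (-1) ^+ (j - l) *: (X ^+ l * (X + g%:MP) ^+ (j - l - 1)) =
  - (X ^+ j - (- X - g%:MP) ^+ j).
Proof.
rewrite subrXX.
have -> : X - (- X - g%:MP) = 2%:R * X + g%:MP by ring.
rewrite -mulrN; congr (_ * _).
rewrite big_nat_rev big_mkord -sumrN; apply: eq_bigr => [[l /= lj]] _.
rewrite add0n.
have -> : (j - (j - l.+1) = l.+1)%N by lia.
have -> : (j - l.+1 = j.-1 - l)%N by lia.
have -> : (l.+1 - 1 = l)%N by lia.
have -> : - X - g%:MP = - (X + g%:MP) by ring.
rewrite [in RHS]exprNn -mul_mpolyC rmorphXn rmorphN rmorph1 exprS; ring.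
Qed.

Lemma UK (N j : nat) (nu g : algC) (X : A) : (j < N)%N ->
  (2%:R * X + g%:MP) *
    (\sum_(0 <= k < N) Kra nu g j k *: X ^+ k - (- X - g%:MP) ^+ j) =
  (- (2 * nu))%:MP * (X ^+ j - (- X - g%:MP) ^+ j).
Proof.
move=> jN; rewrite /Kra.
under eq_bigr => k _ do rewrite scalerDl -scalerA.
rewrite big_split /= K1 // -scaler_sumr K2 //.
rewrite addrAC subrr add0r -mul_mpolyC mulrCA K3 rmorphN; ring.
Qed.

End UK.

Lemma expzP (x : algC) (z : int) (u : nat) : z = u -> x ^ z = x ^+ u.
Proof. by move=> ->. Qed.

Lemma P1nat (a b k l : nat) (h : algC) :
  (-1) ^ (a%:Z - l%:Z) * h ^ (b%:Z + a%:Z - k%:Z - l%:Z) * (binz b k * binz a l) =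
  ('C(b, k)%:R * h ^+ (b - k)) * ('C(a, l)%:R * (- h) ^+ (a - l)).
Proof.
rewrite !binz_nat.
case: (leqP k b) => kb; last by rewrite !(bin_small kb) !(mul0r, mulr0).
case: (leqP l a) => la; last by rewrite !(bin_small la) !(mul0r, mulr0).
rewrite (@expzP _ _ (a - l)) ?(@expzP h _ ((b - k) + (a - l))); try lia.
rewrite [in RHS]exprNn exprD; ring.
Qed.

Lemma epszE (a m k : nat) : epsz a m k =
  if (a <= k < m)%N then 1 else if (m <= k < a)%N then -1 else 0.
Proof. by rewrite /epsz !lez_nat !ltz_nat. Qed.

Lemma Tnat (a b k l m : nat) (h kappa : algC) : h != 0 ->
  (-1) ^ (a%:Z - l%:Z) * h ^ (b%:Z + a%:Z - k%:Z - l%:Z) *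
    (kappa / h * ((-1) ^ (m%:Z - k%:Z) * binz b m *
       binz (a%:Z + m%:Z - k%:Z - 1) l * epsz a m k)) =
  - kappa * (('C(b, m)%:R * h ^+ (b - m)) *
     (epsz a m k * ('C(a + m - k - 1, l)%:R * (- h) ^+ (a + m - k - 1 - l)))).
Proof.
move=> hz.
rewrite binz_nat.
case: (leqP m b) => mb; last by rewrite !(bin_small mb) !(mul0r, mulr0).
rewrite epszE; case: ifP => [/andP[ak km]|_]; last case: ifP => [/andP[mk ka]|_];
  last by rewrite !(mul0r, mulr0).
- have -> : a%:Z + m%:Z - k%:Z - 1 = (a + m - k - 1)%N by lia.
  rewrite binz_nat.
  case: (leqP l (a + m - k - 1)) => ld; last by rewrite !(bin_small ld) !(mul0r, mulr0).
  have E1 : (-1 : algC) ^ (a%:Z - l%:Z) * (-1) ^ (m%:Z - k%:Z) =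
            (-1) ^+ (a + m - k - 1 - l).+1.
    by rewrite -expfzDr ?oppr_eq0 ?oner_eq0 //; apply: expzP; lia.
  have E2 : h ^ (b%:Z + a%:Z - k%:Z - l%:Z) / h = h ^+ ((b - m) + (a + m - k - 1 - l)).
    rewrite -[h^-1]expr1z exprz_inv -expfzDr //; apply: expzP; lia.
  move: E1 E2; set u1 := (-1) ^ (a%:Z - l%:Z); set u2 := (-1) ^ (m%:Z - k%:Z).
  set hp := h ^ _ => E1 E2.
  transitivity (u1 * u2 * (hp / h) * (kappa * 'C(b, m)%:R * 'C(a + m - k - 1, l)%:R * 1)).
    by rewrite /= !mulrA; ring.
  rewrite E1 E2 exprS exprD (exprNn h); ring.
- have -> : a%:Z + m%:Z - k%:Z - 1 = (a + m - k - 1)%N by lia.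
  rewrite binz_nat.
  case: (leqP l (a + m - k - 1)) => ld; last by rewrite !(bin_small ld) !(mul0r, mulr0).
  have E1 : (-1 : algC) ^ (a%:Z - l%:Z) * (-1) ^ (m%:Z - k%:Z) =
            (-1) ^+ (a + m - k - 1 - l).+1.
    by rewrite -expfzDr ?oppr_eq0 ?oner_eq0 //; apply: expzP; lia.
  have E2 : h ^ (b%:Z + a%:Z - k%:Z - l%:Z) / h = h ^+ ((b - m) + (a + m - k - 1 - l)).
    rewrite -[h^-1]expr1z exprz_inv -expfzDr //; apply: expzP; lia.
  move: E1 E2; set u1 := (-1) ^ (a%:Z - l%:Z); set u2 := (-1) ^ (m%:Z - k%:Z).
  set hp := h ^ _ => E1 E2.
  transitivity (u1 * u2 * (hp / h) * (kappa * 'C(b, m)%:R * 'C(a + m - k - 1, l)%:R * (-1))).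
    by rewrite /= !mulrA; ring.
  rewrite E1 E2 exprS exprD (exprNn h); ring.
Qed.

Section UR.
Variable n : nat.
Local Notation A := {mpoly algC[n]}.

Lemma binsum (N d : nat) (c : algC) (X : A) : (d < N)%N ->
  \sum_(0 <= k < N) ('C(d, k)%:R * c ^+ (d - k)) *: X ^+ k = (X + c%:MP) ^+ d.
Proof.
move=> dN.
rewrite (@sum_nat_cut _ N d.+1) //; last first.
  by move=> k dk; rewrite bin_small // mul0r scale0r.
rewrite addrC exprDn big_mkord; apply: eq_bigr => k _.
rewrite -mulr_natr -mul_mpolyC !rmorphM !rmorphXn /= rmorph_nat; ring.
Qed.

Lemma Tele (N a m : nat) (X Z : A) : (a < N)%N -> (m < N)%N ->
  (X - Z) * \sum_(0 <= k < N) epsz a m k *: (X ^+ k * Z ^+ (a + m - k - 1)) =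
  X ^+ m * Z ^+ a - X ^+ a * Z ^+ m.
Proof.
move=> aN mN.
pose u k := X ^+ k * Z ^+ (a + m - k).
case: (leqP a m) => am.
- rewrite (@big_cat_nat _ _ _ a 0 N) //=; last by lia.
  rewrite big1_seq ?add0r; last first.
    move=> k /andP[_]; rewrite mem_iota => /andP[_ ka].
    by rewrite epszE ifF ?ifF ?scale0r //; lia.
  rewrite (@big_cat_nat _ _ _ m a N) //=; last by lia.
  rewrite [E in _ * (_ + E)]big1_seq ?addr0; last first.
    move=> k /andP[_]; rewrite mem_iota => /andP[mk _].
    by rewrite epszE ifF ?ifF ?scale0r //; lia.
  rewrite mulr_sumr.
  transitivity (\sum_(a <= k < m) (u k.+1 - u k)).
    apply: eq_big_nat => k /andP[ak km].
    rewrite epszE ifT ?scale1r /u; last by lia.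
    have -> : (a + m - k.+1 = a + m - k - 1)%N by lia.
    have -> : (a + m - k = (a + m - k - 1).+1)%N by lia.
    rewrite subn1 /= !exprS; ring.
  rewrite telescope_sumr // /u.
  have -> : (a + m - m = a)%N by lia.
  have -> : (a + m - a = m)%N by lia.
  done.
- rewrite (@big_cat_nat _ _ _ m 0 N) //=; last by lia.
  rewrite big1_seq ?add0r; last first.
    move=> k /andP[_]; rewrite mem_iota => /andP[_ ka].
    by rewrite epszE ifF ?ifF ?scale0r //; lia.
  rewrite (@big_cat_nat _ _ _ a m N) //=; last by lia.
  rewrite [E in _ * (_ + E)]big1_seq ?addr0; last first.
    move=> k /andP[_]; rewrite mem_iota => /andP[mk _].
    by rewrite epszE ifF ?ifF ?scale0r //; lia.
  rewrite mulr_sumr.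
  transitivity (- \sum_(m <= k < a) (u k.+1 - u k)).
    rewrite -sumrN; apply: eq_big_nat => k /andP[ak km].
    rewrite epszE ifF; last by lia.
    rewrite ifT ?scaleN1r /u; last by lia.
    have -> : (a + m - k.+1 = a + m - k - 1)%N by lia.
    have -> : (a + m - k = (a + m - k - 1).+1)%N by lia.
    rewrite subn1 /= !exprS; ring.
  rewrite telescope_sumr /u; last by lia.
  have -> : (a + m - m = a)%N by lia.
  have -> : (a + m - a = m)%N by lia.
  by rewrite opprB. by lia.
Qed.

Lemma RraE (N : nat) (kappa h : algC) (a b k l : nat) : h != 0 ->
  Rra N kappa h b a k l =
  ('C(b, k)%:R * h ^+ (b - k)) * ('C(a, l)%:R * (- h) ^+ (a - l)) +
  kappa * \sum_(0 <= m < N) ('C(b, m)%:R * h ^+ (b - m)) *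
     (epsz a m k * ('C(a + m - k - 1, l)%:R * (- h) ^+ (a + m - k - 1 - l))).
Proof.
move=> hz; rewrite /Rra mulrBr P1nat; congr (_ + _).
rewrite !mulr_sumr -sumrN; apply: eq_bigr => m _.
by rewrite (Tnat _ _ _ _ _ _ hz) mulNr opprK.
Qed.

Lemma UR (N a b : nat) (kappa h : algC) (X Y : A) : (a < N)%N -> (b < N)%N ->
  h != 0 ->
  (X - Y + h%:MP) *
    (\sum_(0 <= k < N) \sum_(0 <= l < N) Rra N kappa h b a k l *: (X ^+ k * Y ^+ l)
     - (Y - h%:MP) ^+ a * (X + h%:MP) ^+ b) =
  (- kappa)%:MP * (X ^+ a * Y ^+ b - (Y - h%:MP) ^+ a * (X + h%:MP) ^+ b).
Proof.
move=> aN bN hz.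
set Z := Y - h%:MP.
have hN : ((- h)%:MP : A) = - h%:MP by rewrite mpolyCN.
have ZE : Z = Y + (- h)%:MP by rewrite hN.
under eq_bigr => k _ do under eq_bigr => l _ do rewrite RraE // scalerDl.
under eq_bigr => k _ do rewrite big_split /=.
rewrite big_split /=.
have S1 : \sum_(0 <= i < N) \sum_(0 <= i0 < N)
     ('C(b, i)%:R * h ^+ (b - i) * ('C(a, i0)%:R * (- h) ^+ (a - i0))) *:
       (X ^+ i * Y ^+ i0) = (X + h%:MP) ^+ b * Z ^+ a.
  rewrite ZE -(binsum h X bN) -(binsum (- h) Y aN) mulr_suml.
  apply: eq_bigr => i _; rewrite mulr_sumr; apply: eq_bigr => j _.
  by rewrite -scalerAl -scalerAr scalerA.
have IN : forall m i : nat, (m < N)%N ->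
  \sum_(0 <= i0 < N) (epsz a m i *
      ('C(a + m - i - 1, i0)%:R * (- h) ^+ (a + m - i - 1 - i0))) *: Y ^+ i0 =
  epsz a m i *: Z ^+ (a + m - i - 1).
  move=> m i mN; rewrite epszE.
  case: ifP => [/andP[ai im]|_]; last case: ifP => [/andP[mi ia]|_].
  - by under eq_bigr => i0 _ do rewrite mul1r; rewrite scale1r ZE binsum //; lia.
  - under eq_bigr => i0 _ do rewrite mulN1r scaleNr.
    by rewrite sumrN scaleN1r ZE binsum //; lia.
  - by rewrite scale0r big1 // => i0 _; rewrite mul0r scale0r.
have S2 : \sum_(0 <= i < N) \sum_(0 <= i0 < N)
     (kappa * \sum_(0 <= m < N) 'C(b, m)%:R * h ^+ (b - m) *
        (epsz a m i * ('C(a + m - i - 1, i0)%:R * (- h) ^+ (a + m - i - 1 - i0)))) *: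
       (X ^+ i * Y ^+ i0) =
   kappa *: \sum_(0 <= m < N) ('C(b, m)%:R * h ^+ (b - m)) *:
     \sum_(0 <= i < N) epsz a m i *: (X ^+ i * Z ^+ (a + m - i - 1)).
  transitivity (\sum_(0 <= i < N) \sum_(0 <= m < N) (kappa * ('C(b, m)%:R * h ^+ (b - m))) *:
     (X ^+ i * \sum_(0 <= i0 < N) (epsz a m i *
      ('C(a + m - i - 1, i0)%:R * (- h) ^+ (a + m - i - 1 - i0))) *: Y ^+ i0)).
    apply: eq_bigr => i _.
    under eq_bigr => i0 _ do rewrite mulr_sumr scaler_suml.
    rewrite exchange_big /=; apply: eq_bigr => m _.
    rewrite mulr_sumr scaler_sumr; apply: eq_bigr => i0 _.
    by rewrite -scalerAr scalerA !mulrA.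
  rewrite exchange_big scaler_sumr /=; apply: eq_big_nat => m /andP[_ mN].
  rewrite scalerA scaler_sumr; apply: eq_bigr => i _.
  by rewrite IN // -scalerAr.
rewrite S1 S2; set K := kappa *: _.
have -> : (X + h%:MP) ^+ b * Z ^+ a + K - Z ^+ a * (X + h%:MP) ^+ b = K by ring.
rewrite /K.
have -> : X - Y + h%:MP = X - Z by rewrite /Z; ring.
rewrite -scalerAr mulr_sumr.
under eq_big_nat => m /andP[_ mN] do rewrite -scalerAr (Tele X Z aN mN) scalerBr scalerAl scalerAr.
rewrite sumrB -mulr_suml -mulr_sumr !binsum // /Z subrK.
rewrite -mul_mpolyC mpolyCN; ring.
Qed.

End UR.

Section PartB.
Variables (n N : nat).
Local Notation A := {mpoly algC[n]}.
Local Notation T := (tidx n N).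
Local Notation vec := 'cV[algC]_(#|{: T}|).
Local Notation ID := (@idPt n).

Lemma impl_basis (M : Op n N) pt af c :
  (forall x : T, af ID * (colp M x - Sb (pt ID) (mono x)) =
                 c%:MP * (mono x - Sb (pt ID) (mono x))) ->
  impl M pt af c.
Proof.
move=> B v; rewrite poly_mul /poly.
rewrite Sb_sum (eq_bigr _ (fun y _ => SbZ (pt ID) _ (mono y))).
rewrite -!sumrB !mulr_sumr; apply: eq_bigr => x _.
by rewrite -!scalerBr -!scalerAr B.
Qed.

Definition upd1 (x : T) (i : 'I_n) (k : 'I_N) : T :=
  [ffun q => if q == i then k else x q].
Definition upd2 (x : T) (i j : 'I_n) (k l : 'I_N) : T :=
  [ffun q => if q == i then k else if q == j then l else x q].

Lemma agree1 (x y : T) (i : 'I_n) :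
  agree_off x y (fun q => q == val i) = (y == upd1 x i (y i)).
Proof.
apply/forallP/eqP => [H|->].
  apply/ffunP => q; rewrite ffunE; case: eqP => [->//|/eqP qi].
  by have := H q; rewrite (inj_eq val_inj) qi /= => /eqP.
by move=> q; apply/implyP; rewrite (inj_eq val_inj) ffunE => /negbTE ->.
Qed.

Lemma agree2 (x y : T) (i j : 'I_n) :
  agree_off x y (fun q => (q == val i) || (q == val j)) =
  (y == upd2 x i j (y i) (y j)).
Proof.
apply/forallP/eqP => [H|->].
  apply/ffunP => q; rewrite ffunE; case: eqP => [->//|/eqP qi].
  case: eqP => [->//|/eqP qj].
  by have := H q; rewrite !(inj_eq val_inj) (negbTE qi) (negbTE qj) /= => /eqP.
move=> q; apply/implyP; rewrite !(inj_eq val_inj) negb_or ffunE.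
by case/andP => /negbTE -> /negbTE ->.
Qed.

Lemma reindex1 (x : T) (i : 'I_n) (G : T -> A) :
  \sum_(y : T) (agree_off x y (fun q => q == val i))%:R *: G y =
  \sum_(k : 'I_N) G (upd1 x i k).
Proof.
have E : forall y : T, (agree_off x y (fun q => q == val i))%:R =
    \sum_(k : 'I_N) ((y == upd1 x i k)%:R : algC).
  move=> y; rewrite agree1 (bigD1 (y i)) //= big1 ?addr0 // => k /negbTE kn.
  case: eqP => // E; move: kn; have := congr1 (fun f : T => f i) E.
  by rewrite ffunE eqxx => <-; rewrite eqxx.
under eq_bigr => y _ do rewrite E scaler_suml.
rewrite exchange_big /=; apply: eq_bigr => k _.
rewrite (bigD1 (upd1 x i k)) //= eqxx scale1r big1 ?addr0 // => y /negbTE ->.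
by rewrite scale0r.
Qed.

Lemma reindex2 (x : T) (i j : 'I_n) (G : T -> A) : i != j ->
  \sum_(y : T) (agree_off x y (fun q => (q == val i) || (q == val j)))%:R *: G y =
  \sum_(k : 'I_N) \sum_(l : 'I_N) G (upd2 x i j k l).
Proof.
move=> ij.
have E : forall y : T, (agree_off x y (fun q => (q == val i) || (q == val j)))%:R =
    \sum_(k : 'I_N) \sum_(l : 'I_N) ((y == upd2 x i j k l)%:R : algC).
  move=> y; rewrite agree2 (bigD1 (y i)) //= (bigD1 (y j)) //= big1 ?addr0.
    rewrite big1 ?addr0 // => k /negbTE kn; apply: big1 => l _.
    case: eqP => // E; move: kn; have := congr1 (fun f : T => f i) E.
    by rewrite ffunE eqxx => <-; rewrite eqxx.
  move=> l /negbTE ln; case: eqP => // E; move: ln; have := congr1 (fun f : T => f j) E.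
  by rewrite ffunE eq_sym (negbTE ij) eqxx => <-; rewrite eqxx.
under eq_bigr => y _ do rewrite E scaler_suml.
rewrite exchange_big /=; apply: eq_bigr => k _.
under eq_bigr => y _ do rewrite scaler_suml.
rewrite exchange_big /=; apply: eq_bigr => l _.
rewrite (bigD1 (upd2 x i j k l)) //= eqxx scale1r big1 ?addr0 // => y /negbTE ->.
by rewrite scale0r.
Qed.

Definition rest1 (x : T) (i : 'I_n) : A := \prod_(q < n | q != i) 'X_q ^+ (x q).
Definition rest2 (x : T) (i j : 'I_n) : A :=
  \prod_(q < n | (q != i) && (q != j)) 'X_q ^+ (x q).

Lemma mono_upd1 x i k : mono (upd1 x i k) = rest1 x i * 'X_i ^+ k.
Proof.
rewrite /mono (bigD1 i) //= mulrC ffunE eqxx; congr (_ * _).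
by apply: eq_bigr => q /negbTE qi; rewrite ffunE qi.
Qed.

Lemma mono_split1 x i : mono x = rest1 x i * 'X_i ^+ (x i).
Proof. by rewrite /mono (bigD1 i) //= mulrC. Qed.

Lemma mono_upd2 x i j k l : i != j ->
  mono (upd2 x i j k l) = rest2 x i j * ('X_i ^+ k * 'X_j ^+ l).
Proof.
move=> ij; rewrite /mono (bigD1 i) //= (bigD1 j) //=; last by rewrite eq_sym.
rewrite !ffunE eqxx eq_sym (negbTE ij) eqxx.
rewrite [RHS]mulrC -mulrA; congr (_ * (_ * _)).
by apply: eq_bigr => q /andP[/negbTE qi /negbTE qj]; rewrite ffunE qi qj.
Qed.

Lemma mono_split2 x i j : i != j ->
  mono x = rest2 x i j * ('X_i ^+ (x i) * 'X_j ^+ (x j)).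
Proof.
move=> ij; rewrite /mono (bigD1 i) //= (bigD1 j) //=; last by rewrite eq_sym.
by rewrite [RHS]mulrC -mulrA.
Qed.

Lemma digit_ord (x : T) (i : 'I_n) : digit x (val i) = val (x i).
Proof. by rewrite /digit valK. Qed.

Lemma colp_op1 (B : nat -> nat -> algC) (x : T) (i : 'I_n) :
  colp (@op1 n N B (val i)) x =
  rest1 x i * \sum_(k : 'I_N) B (val (x i)) k *: 'X_i ^+ k.
Proof.
rewrite /colp /op1 /mkOp.
under eq_bigr => y _ do rewrite mxE !enum_rankK mulrC -scalerA.
rewrite reindex1 mulr_sumr; apply: eq_bigr => k _.
by rewrite mono_upd1 !digit_ord ffunE eqxx scalerAr.
Qed.

Lemma colp_op2 (B : nat -> nat -> nat -> nat -> algC) (x : T) (i j : 'I_n) :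
  val j = (val i).+1 ->
  colp (@op2 n N B (val i)) x =
  rest2 x i j * \sum_(k : 'I_N) \sum_(l : 'I_N)
    B (val (x j)) (val (x i)) k l *: ('X_i ^+ k * 'X_j ^+ l).
Proof.
move=> ji.
have ij : i != j by apply/eqP => E; move: ji; rewrite E; lia.
rewrite /colp /op2 /mkOp -ji.
under eq_bigr => y _ do rewrite mxE !enum_rankK mulrC -scalerA.
rewrite reindex2 // mulr_sumr; apply: eq_bigr => k _.
rewrite mulr_sumr; apply: eq_bigr => l _.
rewrite mono_upd2 // !digit_ord !ffunE eqxx eq_sym (negbTE ij) eqxx.
by rewrite scalerAr.
Qed.

Lemma Sb_refl_mono (x : T) (i : 'I_n) g :
  Sb (refl (val i) g ID) (mono x) = rest1 x i * (- 'X_i - g%:MP) ^+ (x i).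
Proof.
rewrite /mono Sb_prod (bigD1 i) //= mulrC SbXn SbX /refl eqxx getP_ord.
congr (_ * _); apply: eq_bigr => q qi.
by rewrite SbXn SbX /refl (inj_eq val_inj) (negbTE qi).
Qed.

Lemma Sb_swap_mono (x : T) (i j : 'I_n) h : val j = (val i).+1 ->
  Sb (swap (val i) h ID) (mono x) =
  rest2 x i j * (('X_j - h%:MP) ^+ (x i) * ('X_i + h%:MP) ^+ (x j)).
Proof.
move=> ji; have ji' : nat_of_ord j = (nat_of_ord i).+1 := ji.
have ij : i != j by apply/eqP => E; move: ji'; rewrite E; lia.
have gj : getP ID (nat_of_ord i).+1 = 'X_j by rewrite -ji' getP_ord.
have gi : getP ID (nat_of_ord i) = 'X_i by rewrite getP_ord.
rewrite /mono Sb_prod (bigD1 i) //= (bigD1 j) //=; last by rewrite eq_sym.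
rewrite !SbXn !SbX /swap /= eqxx ji' eqxx (gtn_eqF (ltnSn _)) gj gi.
rewrite [RHS]mulrC -mulrA; congr (_ * (_ * _)).
apply: eq_bigr => q /andP[qi qj].
rewrite SbXn SbX /swap /= -ji' !(inj_eq val_inj) (negbTE qi) (negbTE qj).
by [].
Qed.

End PartB.

Section Impls.
Variables (n N : nat).
Local Notation A := {mpoly algC[n]}.
Local Notation T := (tidx n N).
Local Notation ID := (@idPt n).

Lemma impl_K p nu g : (p < n)%N ->
  impl (@op1 n N (Kra nu g) p) (refl p g) (aK p g) (- (2 * nu)).
Proof.
move=> pn; pose i := Ordinal pn; have -> : p = val i by [].
apply: impl_basis => x.
rewrite colp_op1 Sb_refl_mono (mono_split1 x i) /aK getP_ord.
have U := UK nu g ('X_i : A) (ltn_ord (x i)); rewrite big_mkord in U.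
rewrite -!mulrBr mulrCA U; ring.
Qed.

Lemma impl_R p kappa h : (p.+1 < n)%N -> h != 0 ->
  impl (@op2 n N (Rra N kappa h) p) (swap p h) (aR p h) (- kappa).
Proof.
move=> pn hz; have pn0 : (p < n)%N by lia.
pose i := Ordinal pn0; pose j := Ordinal pn.
have -> : p = val i by [].
have ji : val j = (val i).+1 by [].
have ij : i != j by apply/eqP => E; move: ji; rewrite E; lia.
apply: impl_basis => x.
rewrite (colp_op2 _ _ ji) (Sb_swap_mono _ _ ji) (mono_split2 x ij) /aR.
have -> : getP ID (val i).+1 = 'X_j by rewrite -ji getP_ord.
rewrite getP_ord.
have U := UR kappa ('X_i : A) ('X_j) (ltn_ord (x i)) (ltn_ord (x j)) hz.
have E : forall F : nat -> nat -> A,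
  \sum_(0 <= k < N) \sum_(0 <= l < N) F k l = \sum_(k < N) \sum_(l < N) F k l.
  by move=> F; rewrite big_mkord; apply: eq_bigr => k _; rewrite big_mkord.
rewrite E in U.
rewrite -!mulrBr mulrCA U; ring.
Qed.

End Impls.

Section Fin.
Variables (n N : nat).
Local Notation A := {mpoly algC[n]}.
Local Notation ID := (@idPt n).

Lemma impl_neg (M : Op n N) pt af c :
  impl M pt af c -> impl M pt (fun t => - af t) (- c).
Proof. by move=> I v; rewrite mulNr I mpolyCN mulNr. Qed.

Lemma natural_neg pt (af : Pt n -> A) : natural pt af -> natural pt (fun t => - af t).
Proof. by case=> h1 h2; split => // t; rewrite SbN h2. Qed.

Lemma getPID_coef k (i : 'I_n) : (getP ID k)@_(U_(i)%MM) = (k == val i)%:R.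
Proof.
rewrite /getP; case: insubP => [j _ <-|].
  by rewrite /idPt mcoeffXU (inj_eq val_inj).
rewrite mcoeff0; case: eqP => // -> /negP; by rewrite ltn_ord.
Qed.

Lemma nz_coef (f : A) (i : 'I_n) : f@_(U_(i)%MM) != 0 -> f != 0.
Proof. by apply: contraNneq => ->; rewrite mcoeff0. Qed.

Lemma coefC (c : algC) (i : 'I_n) : (c%:MP : A)@_(U_(i)%MM) = 0.
Proof. by rewrite mcoeffC mnm1_eq0 mulr0. Qed.

End Fin.

Ltac coefs := rewrite ?(mcoeffD, mcoeffB, mcoeffN, mcoeffMn, mulr_natl, getPID_coef, coefC, eqxx) /=.

Section Main.
Variables (n N : nat).
Local Notation A := {mpoly algC[n]}.
Local Notation ID := (@idPt n).

Lemma aK_nz p g : (p < n)%N -> aK p g ID != 0.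
Proof.
move=> pn; apply: (@nz_coef _ _ (Ordinal pn)); rewrite /aK; coefs.
by rewrite addr0 (_ : 1 + 1 = 2%:R) // pnatr_eq0.
Qed.

Lemma aR_nz p h : (p.+1 < n)%N -> aR p h ID != 0.
Proof.
move=> pn; have p0 : (p < n)%N by lia.
apply: (@nz_coef _ _ (Ordinal p0)); rewrite /aR; coefs.
by rewrite (gtn_eqF (ltnSn _)) subr0 addr0 oner_eq0.
Qed.

Lemma quad_K p nu g : (p < n)%N ->
  @op1 n N (Kra nu g) p *m @op1 n N (Kra nu g) p = 1%:M.
Proof.
move=> pn; apply: (quad_gen (impl_K (N:=N) nu g pn) (natural_refl _ _ _)).
- by move=> t i; rewrite refl_inv.
- by move=> t; rewrite aK_refl.
- exact: aK_nz.
Qed.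

Lemma quad_R p kappa h : (p.+1 < n)%N -> h != 0 ->
  @op2 n N (Rra N kappa h) p *m @op2 n N (Rra N kappa h) p = 1%:M.
Proof.
move=> pn hz; apply: (quad_gen (impl_R (N:=N) kappa pn hz) (natural_swap _ _ _)).
- by move=> t i; rewrite swap_inv.
- by move=> t; rewrite aR_swap.
- exact: aR_nz.
Qed.

Lemma nSn k : (k.+1 == k) = false. Proof. by elim: k. Qed.
Lemma nnS k : (k == k.+1) = false. Proof. by elim: k. Qed.
Lemma nSSn k : (k.+2 == k) = false. Proof. by elim: k. Qed.
Lemma nnSS k : (k == k.+2) = false. Proof. by elim: k. Qed.

Ltac acomp := rewrite /aK /aR; do 6 (rewrite ?getP_refl ?getP_swap //);
  rewrite /= ?eqSS ?eqxx ?nSn ?nnS ?nSSn ?nnSS /=; try ring.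

Lemma comm_KK p q nu g nu' g' : (p < n)%N -> (q < n)%N -> p != q ->
  @op1 n N (Kra nu g) p *m @op1 n N (Kra nu' g') q =
  @op1 n N (Kra nu' g') q *m @op1 n N (Kra nu g) p.
Proof.
move=> pn qn pq.
apply: (comm_gen (impl_K (N:=N) nu g pn) (natural_refl _ _ _)
                 (impl_K (N:=N) nu' g' qn) (natural_refl _ _ _)).
- by move=> t i; rewrite comm_rr.
- by move=> t; rewrite aK_reflo.
- by move=> t; rewrite aK_reflo // eq_sym.
- exact: aK_nz.
- exact: aK_nz.
Qed.

Lemma comm_KR p q nu g kappa h : (p < n)%N -> (q.+1 < n)%N -> p != q -> p != q.+1 ->
  h != 0 ->
  @op1 n N (Kra nu g) p *m @op2 n N (Rra N kappa h) q =
  @op2 n N (Rra N kappa h) q *m @op1 n N (Kra nu g) p.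
Proof.
move=> pn qn pq pq1 hz.
apply: (comm_gen (impl_K (N:=N) nu g pn) (natural_refl _ _ _)
                 (impl_R (N:=N) kappa qn hz) (natural_swap _ _ _)).
- by move=> t i; rewrite comm_rs.
- by move=> t; rewrite aK_swapo.
- by move=> t; rewrite aR_reflo.
- exact: aK_nz.
- exact: aR_nz.
Qed.

Lemma comm_RR p q kappa h : (q.+1 < n)%N -> (p.+2 <= q)%N -> h != 0 ->
  @op2 n N (Rra N kappa h) p *m @op2 n N (Rra N kappa h) q =
  @op2 n N (Rra N kappa h) q *m @op2 n N (Rra N kappa h) p.
Proof.
move=> qn pq hz; have pn : (p.+1 < n)%N by lia.
apply: (comm_gen (impl_R (N:=N) kappa pn hz) (natural_swap _ _ _)
                 (impl_R (N:=N) kappa qn hz) (natural_swap _ _ _)).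
- by move=> t i; rewrite comm_ss.
- by move=> t; rewrite aR_swapo // pq.
- by move=> t; rewrite aR_swapo // pq orbT.
- exact: aR_nz.
- exact: aR_nz.
Qed.

Lemma braid_RR p kappa h : (p.+2 < n)%N -> h != 0 ->
  @op2 n N (Rra N kappa h) p *m @op2 n N (Rra N kappa h) p.+1 *m
    @op2 n N (Rra N kappa h) p =
  @op2 n N (Rra N kappa h) p.+1 *m @op2 n N (Rra N kappa h) p *m
    @op2 n N (Rra N kappa h) p.+1.
Proof.
move=> p2 hz; have p1 : (p.+1 < n)%N by lia. have p0 : (p < n)%N by lia.
apply: (braidA_gen (impl_R (N:=N) kappa p1 hz) (natural_swap _ _ _)
                   (impl_R (N:=N) kappa p2 hz) (natural_swap _ _ _)).
- by move=> t i; rewrite swap_inv.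
- by move=> t i; rewrite swap_inv.
- by move=> t i; rewrite braidA_pt.
- by move=> t; rewrite aR_swap.
- by move=> t; rewrite aR_swap.
- acomp.
- acomp.
- acomp.
- acomp.
- exact: aR_nz.
- exact: aR_nz.
- apply: (@nz_coef _ _ (Ordinal p0)); rewrite /aR; coefs.
  by rewrite ?eqSS ?nSn ?nSSn ?subr0 ?addr0 ?oner_eq0.
Qed.

Lemma B2L nu g kappa h : (1 < n)%N -> h != 0 ->
  @op1 n N (Kra nu g) 0 *m @op2 n N (Rra N kappa h) 0 *m
    @op1 n N (Kra nu g) 0 *m @op2 n N (Rra N kappa h) 0 =
  @op2 n N (Rra N kappa h) 0 *m @op1 n N (Kra nu g) 0 *m
    @op2 n N (Rra N kappa h) 0 *m @op1 n N (Kra nu g) 0.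
Proof.
move=> n1 hz; have n0 : (0 < n)%N by lia.
apply: (B2_gen (impl_K (N:=N) nu g n0) (natural_refl _ _ _)
               (impl_R (N:=N) kappa n1 hz) (natural_swap _ _ _)).
- by move=> t; rewrite refl_inv.
- by move=> t; rewrite swap_inv.
- by move=> t; rewrite B2L_pt.
- by move=> t; rewrite aK_refl.
- by move=> t; rewrite aR_swap.
all: try acomp.
- exact: aK_nz.
- exact: aR_nz.
- apply: (@nz_coef _ _ (Ordinal n0)); rewrite /aR /aK; coefs.
  set e := (X in X != 0); have -> : e = -1 by rewrite /e; ring.
  by rewrite oppr_eq0 oner_eq0.
- apply: (@nz_coef _ _ (Ordinal n1)); rewrite /aR /aK; coefs.
  set e := (X in X != 0); have -> : e = 2%:R by rewrite /e; ring.
  by rewrite pnatr_eq0.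
Qed.

Lemma B2R nu g kappa h p : (p.+1 < n)%N -> h != 0 ->
  @op1 n N (Kra nu g) p.+1 *m @op2 n N (Rra N kappa h) p *m
    @op1 n N (Kra nu g) p.+1 *m @op2 n N (Rra N kappa h) p =
  @op2 n N (Rra N kappa h) p *m @op1 n N (Kra nu g) p.+1 *m
    @op2 n N (Rra N kappa h) p *m @op1 n N (Kra nu g) p.+1.
Proof.
move=> p1 hz; have p0 : (p < n)%N by lia.
apply: (B2_gen (impl_K (N:=N) nu g p1) (natural_refl _ _ _)
               (impl_neg (impl_R (N:=N) kappa p1 hz)) (natural_neg (natural_swap _ _ _))).
- by move=> t; rewrite refl_inv.
- by move=> t; rewrite swap_inv.
- by move=> t; rewrite B2R_pt.
- by move=> t; rewrite aK_refl.
- by move=> t; rewrite aR_swap.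
all: try acomp.
- exact: aK_nz.
- by rewrite oppr_eq0; exact: aR_nz.
- apply: (@nz_coef _ _ (Ordinal p0)); rewrite /aR /aK; coefs; rewrite nSn /=.
  set e := (X in X != 0); have -> : e = -1 by rewrite /e; ring.
  by rewrite oppr_eq0 oner_eq0.
- apply: (@nz_coef _ _ (Ordinal p0)); rewrite /aR /aK; coefs; rewrite nSn /=.
  set e := (X in X != 0); have -> : e = 2%:R by rewrite /e; ring.
  by rewrite pnatr_eq0.
Qed.

End Main.

Unset Implicit Arguments.

Theorem theorem2 (N n : nat) (kappa h nu0 g0 nun gn : algC) :
  (1 <= N)%N -> (2 <= n)%N -> h != 0 -> g0 != 0 -> gn != 0 ->
  let T := That n N kappa h nu0 g0 nun gn in
  (forall j, (j <= n)%N -> T j *m T j = 1%:M) /\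
  (T 0%N *m T 1%N *m T 0%N *m T 1%N = T 1%N *m T 0%N *m T 1%N *m T 0%N) /\
  (forall j, (1 <= j)%N -> (j <= n - 2)%N ->
     T j *m T j.+1 *m T j = T j.+1 *m T j *m T j.+1) /\
  (T n.-1 *m T n *m T n.-1 *m T n = T n *m T n.-1 *m T n *m T n.-1) /\
  (forall j k, (j <= n)%N -> (k <= n)%N -> (j + 2 <= k)%N ->
     T j *m T k = T k *m T j).
Proof.
move=> N1 n2 hz g0z gnz T.
have T0 : T 0%N = @op1 n N (Kra nu0 g0) 0 by rewrite /T /That eqxx.
have Tn : T n = @op1 n N (Kra nun gn) n.-1.
  rewrite /T /That ifF ?eqxx //; apply/negbTE; lia.
have TM : forall j, (0 < j < n)%N -> T j = @op2 n N (Rra N kappa h) j.-1.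
  move=> j /andP[j0 jn]; rewrite /T /That ifF ?ifF //; apply/negbTE; lia.
have n0 : (0 < n)%N by lia.
have n1 : (n.-1 < n)%N by lia.
split; [|split; [|split; [|split]]].
- move=> j jn.
  case: (posnP j) => [->|j0]; first by rewrite T0; apply: quad_K.
  case: (ltngtP j n) => [jlt|jgt|->]; [|lia|by rewrite Tn; apply: quad_K].
  rewrite TM ?j0 ?jlt //; apply: quad_R => //; lia.
- rewrite T0 (TM 1%N) //.
  exact: B2L.
- move=> j j1 j2.
  rewrite !TM; try (apply/andP; split; lia).
  have -> : j.+1.-1 = j.-1.+1 by lia.
  apply: braid_RR => //; lia.
- rewrite Tn TM; last by (apply/andP; split; lia).
  have -> : n.-1 = (n.-1.-1).+1 by lia.
  rewrite -pred_Sn.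
  symmetry; apply: B2R => //; lia.
- move=> j k jn kn jk.
  case: (posnP j) => [j0|jpos].
  + subst j; rewrite T0.
    case: (ltngtP k n) => [klt|kgt|->]; [| lia |].
    * rewrite TM; last by (apply/andP; split; lia).
      apply: comm_KR => //; lia.
    * by rewrite Tn; apply: comm_KK => //; lia.
  + rewrite TM; last by (apply/andP; split; lia).
    case: (ltngtP k n) => [klt|kgt|->]; [| lia |].
    * rewrite TM; last by (apply/andP; split; lia).
      apply: comm_RR => //; lia.
    * rewrite Tn; symmetry; apply: comm_KR => //; lia.
Qed.
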